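(* Let $(X,\mathcal B,\mu,T)$ be a measure preserving system (a probability space with a measurable map $T\colon X\to X$ preserving $\mu$), let $f\colon X\to[0,\infty]$ be a measurable function, and let $(s_n)_{n\ge1}$ be a two-jumpy scale sequence. Then the function $F(x)=\liminf_{n\to\infty} s_n f(T^n x)$ satisfies $\mu\big(F^{-1}(\{0,\infty\})\big)=1$.
   Context: A scale sequence is a sequence $(s_n)_{n\ge1}$ of positive reals with $s_n\to\infty$. It is two-jumpy if $s_{n+1}\ge s_n$ for all sufficiently large $n$ and $\liminf_{n\to\infty} s_{2n}/s_n>1$. *)

(* Defs.v *)
From HB Require Import structures.
From mathcomp Require Import all_boot all_order all_algebra.
From mathcomp Require Import all_classical all_reals all_analysis.
From mathcomp Require Import measurable_realfun.
Set Implicit Arguments. Unset Strict Implicit. Unset Printing Implicit Defensive.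
Import Order.TTheory GRing.Theory Num.Theory.
Local Open Scope classical_set_scope.
Local Open Scope ring_scope.

(* Sequences (s_n)_{n>=1} are represented as s : nat -> R; the value s 0 is
   irrelevant (all hypotheses and limits only concern n >= 1 / n -> oo). *)

Definition scale_sequence (R : realType) (s : nat -> R) : Prop :=
  (forall n, (0 < n)%N -> 0 < s n) /\ s @ \oo --> +oo.

Definition two_jumpy (R : realType) (s : nat -> R) : Prop :=
  (exists N, forall n, (N <= n)%N -> s n <= s n.+1) /\
  (1%:E < limn_einf (fun n => (s (n.*2) / s n)%:E))%E.

Definition measure_preserving (d : measure_display) (X : measurableType d)
  (R : realType) (mu : set X -> \bar R) (T : X -> X) : Prop :=
  measurable_fun setT T /\
  (forall A, measurable A -> mu (T @^-1` A) = mu A).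

(* Main.v *)
Require Import Defs.
From HB Require Import structures.
From mathcomp Require Import all_boot all_order all_algebra.
From mathcomp Require Import all_classical all_reals all_analysis.
From mathcomp Require Import measurable_realfun.
From mathcomp Require Import zify ring lra.
Import Order.TTheory GRing.Theory Num.Theory.

Lemma sum_le_len (P : nat -> bool) a b : \sum_(a <= i < b) (P i : nat) <= b - a.
Proof.
apply: (@leq_trans (\sum_(a <= i < b) 1)); first by apply: leq_sum => i _; case: (P i).
by rewrite sum_nat_const_nat muln1.
Qed.

Lemma sum_ones (Q : nat -> bool) a b : (forall j, a <= j < b -> Q j) ->
  \sum_(a <= j < b) (Q j : nat) = b - a.
Proof.
move=> HQ; rewrite (@eq_big_nat _ _ _ a b _ (fun _ => 1)).
  by rewrite sum_nat_const_nat muln1.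
by move=> j /HQ ->.
Qed.

Lemma sum_mono_range (Q : nat -> nat) a b c : a <= b -> b <= c ->
  \sum_(a <= j < b) Q j <= \sum_(a <= j < c) Q j.
Proof. by move=> ab bc; rewrite (big_cat_nat ab bc) /= leq_addr. Qed.

Lemma comb_count (P Q : nat -> bool) (M : nat) :
  (forall i, P i -> exists r l, [/\ 0 < l, r <= 3 * l, r + l <= M &
      forall j, r <= j < r + l -> Q (i + j)]) ->
  forall N t, \sum_(t <= i < N) (P i : nat) <= 4 * \sum_(t <= j < N + M) (Q j : nat).
Proof.
move=> HP N.
suff H : forall k t, N - t <= k ->
  \sum_(t <= i < N) (P i : nat) <= 4 * \sum_(t <= j < N + M) (Q j : nat).
  by move=> t; apply: (H (N - t)).
elim=> [|k IH] t Hk.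
  by rewrite big_geq //; lia.
have [Nt|tN] := leqP N t; first by rewrite big_geq.
case Pt: (P t).
- have [r [l [l0 rl rlM HQ]]] := HP t Pt.
  set u := t + r + l.
  have Qsum : \sum_(t + r <= j < u) (Q j : nat) = l.
    rewrite sum_ones; first by rewrite /u; lia.
    move=> j /andP[j1 j2]; have -> : j = t + (j - t) by lia.
    apply: HQ; apply/andP; split; lia.
  have Qsum2 : l <= \sum_(t <= j < u) (Q j : nat).
    rewrite -Qsum (big_cat_nat (_ : t <= t + r)) /= ?leq_addl //; rewrite /u; lia.
  have uNM : u <= N + M by rewrite /u; lia.
  have [uN|Nu] := leqP u N.
  + rewrite (big_cat_nat (_ : t <= u) uN) /=; last by rewrite /u; lia.
    rewrite (big_cat_nat (_ : t <= u) uNM) /=; last by rewrite /u; lia.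
    rewrite mulnDr leq_add //.
      apply: (leq_trans (sum_le_len _ _ _)); move: Qsum2; rewrite /u; lia.
    by apply: IH; rewrite /u; lia.
  + apply: (leq_trans (sum_le_len _ _ _)).
    apply: (@leq_trans (4 * \sum_(t <= j < u) (Q j : nat))); last first.
      by rewrite leq_mul2l sum_mono_range //; rewrite /u; lia.
    move: Qsum2; rewrite /u in Nu *. lia.
- rewrite big_ltn // Pt add0n.
  rewrite [X in _ <= 4 * X]big_ltn; last by lia.
  apply: (leq_trans (IH t.+1 _)); first by lia.
  by rewrite leq_mul2l leq_addl orbT.
Qed.

Lemma arith1 n K h : 4 * K <= n -> 0 < K -> odd n + h * 2 = n ->
  [/\ 0 < (h - K).+1, n - h <= 3 * (h - K).+1, n - h + (h - K).+1 <= (n - K).+1 & 0 < n].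
Proof. move=> h1 h2 h3; have ob : odd n <= 1 by case: (odd n). split; lia. Qed.

Lemma arith2 n K h j : 4 * K <= n -> 0 < K -> odd n + h * 2 = n ->
  n - h <= j < n - h + (h - K).+1 ->
  [/\ K <= n - j, j <= n & (n - j).*2 <= n].
Proof.
move=> h1 h2 h3 /andP[j1 j2]; have ob : odd n <= 1 by case: (odd n).
rewrite -muln2; split; lia.
Qed.

Local Open Scope classical_set_scope.
Local Open Scope ring_scope.

Section liminf_facts.
Context {R : realType}.
Local Open Scope ereal_scope.
Implicit Types u v : (\bar R)^nat.

Lemma einf_supE u : limn_einf u = ereal_sup (range (einfs u)).
Proof. by rewrite limn_einf_lim; apply/cvg_lim => //; exact: cvg_einfs_sup. Qed.

Lemma liminf_lt u t : limn_einf u < t ->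
  forall K, exists2 m, (K <= m)%N & u m < t.
Proof.
rewrite einf_supE => h K.
have : einfs u K < t.
  by apply: le_lt_trans h; apply: ereal_sup_ubound; exists K.
by move=> /ereal_inf_lt[_ [m /= Km <-] umt]; exists m.
Qed.

Lemma lt_liminf u t : t < limn_einf u ->
  exists K, forall m, (K <= m)%N -> t < u m.
Proof.
rewrite einf_supE => /ereal_sup_gt[_ [K _ <-] tK]; exists K => m Km.
by apply: lt_le_trans tK _; apply: ereal_inf_lbound; exists m.
Qed.

Lemma liminf_le_shift u v N :
  (forall n, (N <= n)%N -> u n <= v n.+1) -> limn_einf u <= limn_einf v.
Proof.
move=> uv; rewrite !einf_supE; apply: ge_ereal_sup => _ [K _ <-].
apply: (@le_trans _ _ (einfs u (maxn K N))).
  exact: nondecreasing_einfs (leq_maxl K N).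
apply: (@le_trans _ _ (einfs v (maxn K N).+1)); last first.
  by apply: ereal_sup_ubound; exists (maxn K N).+1.
apply: le_ereal_inf_tmp => _ [k /= Kk <-].
case: k Kk => // k Kk.
apply: (@le_trans _ _ (u k)); first by apply: ereal_inf_lbound; exists k.
by apply: uv; rewrite (leq_trans (leq_maxr K N)).
Qed.
End liminf_facts.
Arguments liminf_lt {R u t}.
Arguments lt_liminf {R u t}.
Arguments liminf_le_shift {R u v N}.


Lemma iter_meas (d : measure_display) (X : measurableType d) (T : X -> X) :
  measurable_fun setT T -> forall n, measurable_fun setT (iter n T).
Proof.
move=> mT; elim=> [|n IH] /=; first exact: measurable_id.
exact: (measurableT_comp mT IH).
Qed.
Arguments iter_meas {d X T}.

Lemma iter_pres (d : measure_display) (X : measurableType d) (R : realType)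
  (mu : probability X R) (T : X -> X) : measure_preserving mu T ->
  forall n A, measurable A -> mu (iter n T @^-1` A) = mu A.
Proof.
move=> [mT pT]; elim=> [|n IH] A mA //=.
have -> : (fun x => T (iter n T x)) @^-1` A = iter n T @^-1` (T @^-1` A) by [].
rewrite IH ?pT //.
by rewrite -[_ @^-1` _]setTI; apply: mT.
Qed.
Arguments iter_pres {d X R mu T}.

Lemma indic_iter_meas (d : measure_display) (X : measurableType d) (R : realType)
  (T : X -> X) (A : set X) : measurable_fun setT T -> measurable A ->
  forall n, measurable_fun setT (fun x => (\1_A (iter n T x) : R)%:E).
Proof.
move=> mT mA n; apply/measurable_EFinP.
apply: (@measurableT_comp _ _ _ _ _ _ (\1_A : X -> R)); first exact: measurable_indic.
exact: iter_meas.
Qed.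
Arguments indic_iter_meas {d X R T A}.

Lemma integral_indic_iter (d : measure_display) (X : measurableType d) (R : realType)
  (mu : probability X R) (T : X -> X) : measure_preserving mu T ->
  forall n A, measurable A ->
  (\int[mu]_x (\1_A (iter n T x) : R)%:E = mu A)%E.
Proof.
move=> hT n A mA.
have -> : (fun x => (\1_A (iter n T x) : R)%:E) = (fun x => (\1_(iter n T @^-1` A) x)%:E).
  by apply: funext => x.
rewrite integral_indic //; last by have [mT _] := hT; rewrite -[_ @^-1` _]setTI; apply: (iter_meas mT n) => //; exact: measurableT.
by rewrite setIT; exact: (iter_pres hT n A mA).
Qed.

Lemma real_limit_bound (R : realType) (z dd : R) (M : nat) :
  (forall N : nat, N%:R * z <= 4 * (N + M)%:R * dd) -> z <= 4 * dd.
Proof.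
move=> H; have [d0|d0] := leP 0 dd; last first.
  move: (H 1%N); rewrite natrD mul1r => h; apply: (le_trans h).
  have : 0 <= M%:R :> R by [].
  by move=> M0; nra.
rewrite leNgt; apply/negP => zd.
have g0 : 0 < z - 4 * dd by rewrite subr_gt0.
set N := (Num.trunc (4 * M%:R * dd / (z - 4 * dd))).+1.
have HN : 4 * M%:R * dd / (z - 4 * dd) < N%:R by apply: truncnS_gt.
move: (H N); rewrite natrD.
rewrite ltr_pdivrMr // in HN.
have : N%:R * z > 4 * (N%:R + M%:R) * dd.
  by move: HN; set a := N%:R; set b := M%:R; nra.
by move=> h1 h2; move: (lt_le_trans h1 h2); rewrite ltxx.
Qed.

Lemma run_bound (d : measure_display) (X : measurableType d) (R : realType)
  (mu : probability X R) (T : X -> X) : measure_preserving mu T ->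
  forall (D Z : set X) (M : nat), measurable D -> measurable Z ->
  (forall x, Z x -> exists r l, [/\ (0 < l)%N, (r <= 3 * l)%N, (r + l <= M)%N &
      forall j, (r <= j < r + l)%N -> D (iter j T x)]) ->
  (mu Z <= 4%:E * mu D)%E.
Proof.
move=> hT D Z M mD mZ HZ.
have [mT _] := hT.
have key : forall N : nat, (mu Z *+ N <= (mu D *+ 4) *+ (N + M))%E.
  move=> N.
  pose f1 := fun x => (\sum_(0 <= i < N) (\1_Z (iter i T x) : R)%:E)%E.
  pose f2 := fun x => (\sum_(0 <= j < N + M) \sum_(k < 4) (\1_D (iter j T x) : R)%:E)%E.
  have mZi : forall i, measurable_fun setT (fun x => (\1_Z (iter i T x) : R)%:E).
    by move=> i; exact: indic_iter_meas.
  have mDi : forall i, measurable_fun setT (fun x => (\1_D (iter i T x) : R)%:E).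
    by move=> i; exact: indic_iter_meas.
  have Zi0 : forall i x, setT x -> (0 <= (\1_Z (iter i T x) : R)%:E)%E.
    by move=> i x _; rewrite lee_fin indicE.
  have Di0 : forall i x, setT x -> (0 <= (\1_D (iter i T x) : R)%:E)%E.
    by move=> i x _; rewrite lee_fin indicE.
  have E1 : (\int[mu]_x f1 x = mu Z *+ N)%E.
    rewrite /f1 (ge0_integral_sum mu measurableT mZi Zi0).
    under eq_bigr do rewrite integral_indic_iter //.
    by rewrite big_mkord sumr_const card_ord.
  have mD4 : forall j, measurable_fun setT (fun x => (\sum_(k < 4) (\1_D (iter j T x) : R)%:E)%E).
    by move=> j; apply: emeasurable_sum => k.
  have D40 : forall j x, setT x -> (0 <= \sum_(k < 4) (\1_D (iter j T x) : R)%:E)%E.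
    by move=> j x _; apply: sume_ge0 => k _; exact: Di0.
  have E2 : (\int[mu]_x f2 x = (mu D *+ 4) *+ (N + M))%E.
    rewrite /f2 (ge0_integral_sum mu measurableT mD4 D40).
    under eq_bigr => j _.
      rewrite (ge0_integral_sum mu measurableT (fun _ => mDi j) (fun _ => Di0 j)).
      under eq_bigr do rewrite integral_indic_iter //.
      rewrite sumr_const card_ord.
    over.
    by rewrite big_mkord sumr_const card_ord.
  rewrite -E1 -E2; apply: ge0_le_integral => //.
  - by move=> x _; apply: sume_ge0 => k _; rewrite lee_fin indicE.
  - by apply: emeasurable_sum => k; exact: indic_iter_meas.
  - by apply: emeasurable_sum => j; apply: emeasurable_sum => k; exact: indic_iter_meas.
  move=> x _; rewrite /f1 /f2.
  under [X in (_ <= X)%E]eq_bigr do rewrite sumr_const card_ord.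
  rewrite !sumEFin lee_fin.
  pose P := fun i => (iter i T x \in Z).
  pose Q := fun j => (iter j T x \in D).
  have HPQ : forall i, P i -> exists r l, [/\ (0 < l)%N, (r <= 3 * l)%N, (r + l <= M)%N &
      forall j, (r <= j < r + l)%N -> Q (i + j)%N].
    move=> i; rewrite /P inE => /HZ [r [l [l0 rl rlM Hj]]].
    exists r, l; split => // j hj; rewrite /Q inE addnC iterD; exact: Hj.
  have := @comb_count P Q M HPQ N 0.
  move=> Hc.
  have Hc' : ((\sum_(0 <= i < N) (P i : nat))%:R <= (4 * \sum_(0 <= j < N + M) (Q j : nat))%:R :> R).
    by rewrite ler_nat.
  rewrite natrM natr_sum natr_sum in Hc'.
  apply: (le_trans _ (le_trans Hc' _)).
    by rewrite le_eqVlt; apply/orP; left; apply/eqP; apply: eq_bigr => i _; rewrite indicE.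
  rewrite mulr_sumr; apply: ler_sum => j _; rewrite indicE mulr_natr.
  by rewrite /Q; case: (_ \in D); rewrite /= ?mulr0n ?addr0.
have fZ : mu Z \is a fin_num by rewrite ge0_fin_numE // (le_lt_trans (probability_le1 mu mZ)) // ltry.
have fD : mu D \is a fin_num by rewrite ge0_fin_numE // (le_lt_trans (probability_le1 mu mD)) // ltry.
move: key fZ fD.
case: (mu Z) => [z| |] //; case: (mu D) => [dd| |] // key _ _.
rewrite -EFinM lee_fin.
apply: (@real_limit_bound R _ _ M).
move=> N; move: (key N); rewrite -!EFin_natmul lee_fin.
move=> h; rewrite -[z *+ N]mulr_natl -[_ *+ (N + M)]mulr_natl in h; apply: (le_trans h).
by rewrite le_eqVlt; apply/orP; left; apply/eqP; ring.
Qed.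
Arguments run_bound {d X R mu T}.


Lemma null_bigcup (d : measure_display) (X : measurableType d) (R : realType)
  (mu : {measure set X -> \bar R}) (A : nat -> set X) :
  (forall n, measurable (A n)) -> (forall n, mu (A n) = 0%E) ->
  mu (\bigcup_n A n) = 0%E.
Proof.
move=> mA A0; apply/eqP; rewrite eq_le measure_ge0 andbT.
have h : (\bigcup_n A n) `<=` \bigcup_n A n by [].
have := measure_sigma_subadditive mu mA (bigcupT_measurable A mA) h.
move=> /le_trans; apply.
by rewrite eseries0 // => i _ _; exact: A0.
Qed.

Lemma ereal_rat_between (R : realType) (a b : \bar R) : (a < b)%E ->
  exists q : rat, (a < (ratr q)%:E < b)%E.
Proof.
have H : forall x y : R, x < y -> exists q : rat, ((x%:E < (ratr q)%:E) && ((ratr q)%:E < y%:E))%E.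
  move=> x y xy; have [q] := rat_in_itvoo xy; rewrite in_itv /= => /andP[h1 h2].
  by exists q; rewrite !lte_fin h1 h2.
case: a => [a||]; case: b => [b||] //= ab.
- by apply: H; rewrite -lte_fin.
- have [|q /andP[q1 _]] := H a (a + 1); first by lra.
  by exists q; rewrite q1 ltry.
- have [|q /andP[_ q2]] := H (b - 1) b; first by lra.
  by exists q; rewrite q2 ltNyr.
- by exists 0; rewrite ltNyr ltry.
Qed.

Lemma key_ineq (R : realType) (c r a : R) : 1 < c -> 0 < r ->
  a * c < (c + 3) / 4 * r -> a < (c + 1) / (2 * c) * r.
Proof.
move=> c1 r0 h.
have c0 : 0 < 2 * c by lra.
rewrite mulrAC ltr_pdivlMr //.
have : (c + 3) / 4 * r = (c * r + 3 * r) / 4 by field.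
move=> e; rewrite e in h.
nra.
Qed.

Lemma exists_between1 (R : realType) (L : \bar R) : (1%:E < L)%E ->
  exists c : R, 1 < c /\ (c%:E < L)%E.
Proof.
case: L => [r||] //= hr.
- exists ((1 + r) / 2); rewrite lte_fin in hr; rewrite lte_fin; split; lra.
- by exists 2; split; [lra|rewrite ltry].
Qed.
Arguments key_ineq {R c r a}.
Arguments ereal_rat_between {R a b}.
Arguments exists_between1 {R L}.
Arguments null_bigcup {d X R} mu {A}.


Theorem theorem3p6 (d : measure_display) (X : measurableType d) (R : realType)
  (mu : probability X R) (T : X -> X) (f : X -> \bar R) (s : nat -> R) :
  measure_preserving mu T ->
  measurable_fun [set: X] f ->
  (forall x, (0 <= f x)%E) ->
  scale_sequence s ->
  two_jumpy s ->
  mu ((fun x => limn_einf (fun n => ((s n)%:E * f (iter n T x))%E))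
        @^-1` [set 0%E; +oo%E]) = 1%E.
Proof.
move=> hT mf f0 [spos sinf] [[N0 smono] hjump].
have [mT pT] := hT.
pose phi := fun n x => ((s n)%:E * f (iter n T x))%E.
pose F := fun x => limn_einf (fun n => phi n x).
change (mu (F @^-1` [set 0%E; +oo%E]) = 1%E).
have smon : forall a b, (N0 <= a)%N -> (a <= b)%N -> s a <= s b.
  move=> a b Na; elim: b => [|b IH]; first by rewrite leqn0 => /eqP ->.
  rewrite leq_eqVlt => /orP[/eqP -> //| ab].
  rewrite ltnS in ab; apply: (le_trans (IH ab)); apply: smono.
  exact: leq_trans Na ab.
have [c [c1 [K1 Hc]]] : exists c : R, 1 < c /\ exists K1, forall m, (K1 <= m)%N -> c * s m <= s m.*2.
  have [c [c1 cL]] := exists_between1 hjump.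
  exists c; split => //.
  have [K1 HK1] := lt_liminf cL.
  exists (maxn K1 1) => m Km.
  have := HK1 m (leq_trans (leq_maxl _ _) Km); rewrite lte_fin.
  have sm : 0 < s m by apply: spos; rewrite (leq_trans _ Km) // leq_maxr.
  by rewrite ltr_pdivlMr // => h; exact: ltW.
have F0 : forall x, (0 <= F x)%E.
  move=> x; rewrite /F einf_supE.
  have h : range (einfs (fun n => phi n x)) (einfs (fun n => phi n x) 1%N) by exists 1%N.
  apply: (@le_trans _ _ (einfs (fun n => phi n x) 1%N)); last exact: ereal_sup_ubound _ _ h.
  apply: le_ereal_inf_tmp => _ [k /= k1 <-]; apply: mule_ge0 => //.
  by rewrite lee_fin; apply/ltW/spos.
have mphi : forall n, measurable_fun setT (phi n).
  move=> n; apply: measurable_funeM; exact: (measurableT_comp mf (iter_meas mT n)).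
have mF : measurable_fun setT F.
  have -> : F = (@oppe R) \o (fun x => limn_esup (fun n => (- phi n x)%E)) by [].
  apply: measurableT_comp; first exact: oppe_measurable.
  apply: (measurable_fun_limn_esup (f := fun n x => (- phi n x)%E)) => n.
  have -> : (fun x => (- phi n x)%E) = (@oppe R) \o phi n by [].
  by apply: measurableT_comp; [exact: oppe_measurable|exact: mphi].
have FT : forall x, (F (T x) <= F x)%E.
  move=> x; apply: (liminf_le_shift (N := N0)) => n Nn.
  rewrite /phi -iterSr; apply: lee_wpmul2r; first exact: f0.
  by rewrite lee_fin; exact: smono.
have probfin : forall A, measurable A -> mu A \is a fin_num.
  move=> A mA; rewrite ge0_fin_numE //.
  exact: (le_lt_trans (probability_le1 mu mA) (ltry 1)).
pose qn := fun n : nat => (ratr (odflt 0 (@unpickle rat n)) : R).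
pose U := fun n => F @^-1` `]-oo, (qn n)%:E[.
have mU : forall n, measurable (U n).
  by move=> n; rewrite -[U n]setTI; apply: mF => //; exact: emeasurable_itv.
pose B := fun n => T @^-1` U n `\` U n.
have mTU : forall n, measurable (T @^-1` U n).
  by move=> n; rewrite -[_ @^-1` _]setTI; apply: mT.
have mB : forall n, measurable (B n) by move=> n; apply: measurableD.
have B0 : forall n, mu (B n) = 0%E.
  move=> n; rewrite /B measureD //; last by rewrite ltey_eq probfin.
  rewrite setIidr; last first.
    by move=> x; rewrite /U /= !in_itv /= => Fx; exact: le_lt_trans (FT x) Fx.
  have e : mu (T @^-1` U n) = mu (U n) := pT _ (mU n).
  change ((mu (T @^-1` U n) - mu (U n))%E = 0%E).
  by rewrite e subee // probfin.
pose Bad1 := \bigcup_n B n.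
have mBad1 : measurable Bad1 by exact: bigcupT_measurable.
have Bad10 : mu Bad1 = 0%E by exact: null_bigcup.
pose Nul := \bigcup_j (iter j T @^-1` Bad1).
have mNulj : forall j, measurable (iter j T @^-1` Bad1).
  by move=> j; rewrite -[_ @^-1` _]setTI; by apply: (iter_meas mT j) => //; exact: measurableT.
have mNul : measurable Nul by exact: bigcupT_measurable.
have Nul0 : mu Nul = 0%E.
  apply: null_bigcup => // j; move: (iter_pres hT j Bad1 mBad1); rewrite Bad10; exact.
have inv : forall x, ~ Nul x -> forall j, F (iter j T x) = F x.
  move=> x nx; elim=> [|j IH] //=.
  rewrite -IH; apply/eqP; rewrite eq_le FT /= leNgt; apply/negP => hlt.
  have [q /andP[q1 q2]] := ereal_rat_between hlt.
  apply: nx; exists j => //; exists (pickle q) => //.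
  rewrite /B /U /qn pickleK /=; split; first by rewrite in_itv /=.
  by rewrite in_itv /= ltNge (ltW q2).
pose th := (c + 1) / (2 * c).
pose th2 := (c + 3) / 4.
have th1 : th < 1.
  by rewrite /th ltr_pdivrMr ?mul1r; lra.
have th21 : 1 < th2 by rewrite /th2; lra.
pose G := fun m => F @^-1` `]0%E, +oo%E[ `&` (setT `&` [set y | (phi m y < th%:E * F y)%E]).
have mG : forall m, measurable (G m).
  move=> m; apply: measurableI.
    by rewrite -[_ @^-1` _]setTI; apply: mF => //; exact: emeasurable_itv.
  apply: measurable_lte => //; apply: measurable_funeM; exact: mF.
pose D := fun K => \bigcup_(m in [set m | (K <= m)%N]) G m.
have mD : forall K, measurable (D K).
  by move=> K; apply: bigcup_measurable => m _; exact: mG.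
have Dcap : \bigcap_K D K = set0.
  apply/seteqP; split => // y Dy.
  have [m _ [/= Fpos _]] := Dy 0%N I.
  move: Fpos; rewrite in_itv /= => /andP[Fp Finf].
  have Ffin : F y \is a fin_num by rewrite (ge0_fin_numE (F0 y)).
  set r := fine (F y).
  have E : F y = r%:E by rewrite /r fineK.
  have r0 : 0 < r by rewrite -lte_fin -E.
  have : ((th * r)%:E < F y)%E.
    by rewrite E lte_fin -[X in _ < X]mul1r ltr_pM2r.
  move=> /lt_liminf [K0 HK0].
  have [m' Km' [_ [_ hm]]] := Dy K0 I.
  have := HK0 m' Km'; rewrite -/(phi m' y).
  by move: hm; rewrite /= E -EFinM => hm; rewrite ltNge (ltW hm).
have Dlim : (mu \o D) @ \oo --> 0%E.
  rewrite -(measure0 mu) -Dcap.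
  apply: nonincreasing_cvg_mu => //.
  - by rewrite ltey_eq probfin.
  - by apply: bigcapT_measurable.
  - move=> a b ab; apply/subsetPset => y [m /= bm Gm]; exists m => //.
    exact: leq_trans ab bm.
pose Zm := fun K M => \bigcup_(r in [set: nat])
  \bigcup_(l in [set l | [/\ (0 < l)%N, (r <= 3 * l)%N & (r + l <= M)%N]])
  \bigcap_(j in [set j | (r <= j < r + l)%N]) (iter j T @^-1` D K).
have mZm : forall K M, measurable (Zm K M).
  move=> K M; apply: bigcup_measurable => r _.
  apply: bigcup_measurable => l [l0 _ _].
  apply: bigcap_measurable; first by exists r; rewrite /= leqnn /= -[X in (X < _)%N]addn0 ltn_add2l.
  move=> j _; rewrite -[_ @^-1` _]setTI.
  by apply: (iter_meas mT j) => //.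
have ZmD : forall K M, (mu (Zm K M) <= 4%:E * mu (D K))%E.
  move=> K M; apply: (run_bound hT _ _ M (mD K) (mZm K M)).
  move=> x [r _ [l [l0 rl rlM] Hj]]; exists r, l; split => //.
pose Z := fun K => \bigcup_M Zm K M.
have ZD : forall K, (mu (Z K) <= 4%:E * mu (D K))%E.
  move=> K.
  have cv : (mu \o Zm K) @ \oo --> mu (Z K).
    apply: nondecreasing_cvg_mu => //.
    - by apply: bigcupT_measurable.
    - move=> a b ab; apply/subsetPset => x [r _ [l [l0 rl rlM] Hj]].
      by exists r => //; exists l => //; split => //; exact: leq_trans rlM ab.
  rewrite -(cvg_lim _ cv) //; apply: lime_le; first by apply/cvg_ex; eexists; exact: cv.
  by apply: nearW => M; exact: ZmD.
pose Kmin := maxn (maxn N0 K1) 1.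
pose W := F @^-1` `]0%E, +oo%E[.
have incl : forall K, (Kmin <= K)%N -> W `<=` Nul `|` Z K.
  move=> K KK x Wx.
  have [nx|nx] := pselect (Nul x); first by left.
  right.
  move: Wx; rewrite /W /= in_itv /= => /andP[Fp Finf].
  have Ffin : F x \is a fin_num by rewrite (ge0_fin_numE (F0 x)).
  set r := fine (F x).
  have E : F x = r%:E by rewrite /r fineK.
  have r0 : 0 < r by rewrite -lte_fin -E.
  have Flt : (F x < (th2 * r)%:E)%E by rewrite E lte_fin -[X in X < _]mul1r ltr_pM2r.
  have [n n4K hn] := liminf_lt Flt (4 * K).
  have KN0 : (N0 <= K)%N.
    exact: leq_trans (leq_trans (leq_maxl N0 K1) (leq_maxl _ 1)) KK.
  have KK1 : (K1 <= K)%N.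
    exact: leq_trans (leq_trans (leq_maxr N0 K1) (leq_maxl _ 1)) KK.
  have K1' : (0 < K)%N by exact: leq_trans (leq_maxr _ 1) KK.
  pose h := n./2.
  have Hh : (odd n + h * 2 = n)%N by rewrite muln2 odd_double_half.
  have [a1 a2 a3 n0] := arith1 _ _ _ n4K K1' Hh.
  exists (n - K)%N.+1 => //.
  exists (n - h)%N => //.
  exists (h - K)%N.+1; first by split.
  move=> j hj.
  have [b1 b2 b3] := arith2 _ _ _ _ n4K K1' Hh hj.
  exists (n - j)%N; first exact: b1.
  split.
    by rewrite /= inv // in_itv /= Fp Finf.
  split => //.
  rewrite /= /phi inv // E.
  have -> : iter (n - j)%N T (iter j T x) = iter n T x by rewrite -iterD subnK.
  move: hn; rewrite /phi.
  have sn : 0 < s n by apply: spos.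
  case Ef: (f (iter n T x)) => [w||].
  - rewrite -EFinM lte_fin => hw; rewrite -!EFinM lte_fin.
    have w0 : 0 <= w by move: (f0 (iter n T x)); rewrite Ef lee_fin.
    have hc : c * s (n - j)%N <= s (n - j)%N.*2 by apply: Hc; exact: leq_trans KK1 b1.
    have hm : s (n - j)%N.*2 <= s n.
      apply: smon => //; apply: (leq_trans KN0); apply: (leq_trans b1).
      by rewrite -addnn leq_addr.
    apply: key_ineq c1 r0 _.
    apply: (le_lt_trans _ hw).
    rewrite mulrAC [_ * c]mulrC.
    by apply: ler_wpM2r => //; exact: le_trans hc hm.
  - by rewrite gt0_muley ?lte_fin // ltNge leey.
  - by move: (f0 (iter n T x)); rewrite Ef.
have WS : F @^-1` [set 0%E; +oo%E] = ~` W.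
  apply/seteqP; split => x /=; rewrite /W /= in_itv /=.
  - by move=> [->|->] /andP[h1 h2]; [rewrite ltxx in h1 | rewrite ltxx in h2].
  - move=> h; have := F0 x; rewrite le_eqVlt => /orP[/eqP <-|Fp]; first by left.
    right; apply/eqP; rewrite eq_le leey /= leNgt; apply/negP => Finf.
    by apply: h; rewrite Fp Finf.
have mW : measurable W.
  by rewrite -[W]setTI; apply: mF => //; exact: emeasurable_itv.
have muW : mu W = 0%E.
  apply/eqP; rewrite eq_le measure_ge0 andbT.
  have cv4 : (fun K => 4%:E * mu (D K))%E @ \oo --> 0%E.
    rewrite -(mule0 4%:E); apply: cvgeZl => //; exact: Dlim.
  rewrite -(cvg_lim _ cv4) //; apply: lime_ge; first by apply/cvg_ex; eexists; exact: cv4.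
  exists Kmin => // K /= KK.
  have mZK : measurable (Z K) by exact: bigcupT_measurable.
  apply: (le_trans (le_measure _ _ _ (incl K KK))); rewrite ?inE //; first exact: measurableU.
  apply: (le_trans (measureU2 _ mNul mZK)).
  have e : mu Nul = 0%E := Nul0.
  change ((mu Nul + mu (Z K))%E <= 4%:E * mu (D K))%E.
  by rewrite e add0e; exact: ZD.
by rewrite WS probability_setC // muW sube0.
Qed.
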